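(* Let $G$ be a graph with bandwidth $\mathrm{bw}(G)=b$, and let $H$ be a two-terminal edge gadget on $t\ge 2$ vertices. Let $G_H$ be the graph obtained from $G$ by replacing every edge of $G$ by $H$. Then \[ \mathrm{bw}(G_H)\le (b+1)\bigl(1+(t-2)b\bigr). \]
   Context: Graphs are finite and simple. For a graph $G$ on $n$ vertices, $\mathrm{bw}(G)=\min_{\sigma}\max_{uv\in E(G)}|\sigma(u)-\sigma(v)|$, where the minimum ranges over all bijections $\sigma:V(G)\to[n]$. A two-terminal edge gadget is a graph $H$ with two distinguished distinct attachment vertices $\alpha,\beta$. Replacing an edge $uv$ of a graph by $H$ means deleting $uv$, adding a fresh copy $H_{uv}$ of $H$ (disjoint from everything else), and identifying its two attachment vertices with $u$ and $v$ (in either order); replacing every edge does this simultaneously for all edges with independent fresh copies. *)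

(* Defs.v *)
From HB Require Import structures.
From mathcomp Require Import all_boot.
Set Implicit Arguments. Unset Strict Implicit. Unset Printing Implicit Defensive.

Definition simple_graph (T : finType) (e : rel T) : Prop :=
  symmetric e /\ irreflexive e.

Definition ndist (m n : nat) : nat := (m - n) + (n - m).

Definition bw_width (T : finType) (e : rel T) (s : T -> nat) : nat :=
  \max_(u : T) \max_(v : T | e u v) ndist (s u) (s v).

(* bandwidth: minimum of the width over all bijections V -> [n]
   (injective maps T -> 'I_#|T| are exactly the bijections; positions are
   0-based, which does not affect differences).  The initial value #|T| of
   the min is never attained as a bijection always exists and has width
   < #|T| (or the graph is empty, where both are 0). *)
Definition bandwidth (T : finType) (e : rel T) : nat :=
  \big[minn/#|T|]_(s : {ffun T -> 'I_#|T|} | injectiveb s)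
     bw_width e (fun x => nat_of_ord (s x)).

Section Replace.
Variables (T U : finType) (e : rel T) (o : rel T) (h : rel U) (a b : U).

(* Oriented edges of G: each edge uv of G is represented once, by the pair
   (u,v) with o u v; in the copy H_uv, a is identified with u and b with v. *)
Definition oedge : finType := {p : T * T | e p.1 p.2 && o p.1 p.2}.
Definition inner : finType := {x : U | (x != a) && (x != b)}.
Definition GH_vertex : finType := (T + oedge * inner)%type.

Definition attach (p : oedge) (x : U) : GH_vertex :=
  if x == a then inl (val p).1
  else if x == b then inl (val p).2
  else match (insub x : option inner) with
       | Some y => inr (p, y)
       | None => inl (val p).1 (* unreachable *)
       end.

(* Edges of G_H: exactly the images of edges of the copies H_p
   (all original edges of G are deleted). *)
Definition GH_rel : rel GH_vertex := fun w1 w2 =>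
  [exists p : oedge, exists x : U, exists y : U,
     [&& h x y, attach p x == w1 & attach p y == w2]].
End Replace.

(* Main.v *)
Require Import Defs.
From HB Require Import structures.
From mathcomp Require Import all_boot zify.
From Stdlib Require Import Lia.
Set Implicit Arguments. Unset Strict Implicit.

Lemma bigmin_le_seq (I : eqType) (r : seq I) (P : pred I) (F : I -> nat) x0 j :
  j \in r -> P j -> \big[minn/x0]_(i <- r | P i) F i <= F j.
Proof.
elim: r => //= i r IH; rewrite inE big_cons => /predU1P [<- ->|/IH H Pj].
  exact: geq_minl.
case: (P i); last exact: H.
by rewrite geq_min H // orbT.
Qed.

Lemma ndist_lt a b n : a < n -> b < n -> ndist a b <= n.
Proof. rewrite /ndist; lia. Qed.

Lemma bigmin_le (I : finType) (P : pred I) (F : I -> nat) x0 j :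
  P j -> \big[minn/x0]_(i | P i) F i <= F j.
Proof. exact: bigmin_le_seq (mem_index_enum j). Qed.

Lemma width_le (T : finType) (e : rel T) (s : T -> nat) W :
  (forall u v, e u v -> ndist (s u) (s v) <= W) -> bw_width e s <= W.
Proof.
move=> H; apply/bigmax_leqP => u _; apply/bigmax_leqP => v; exact: H.
Qed.

Lemma width_edge (T : finType) (e : rel T) (s : T -> nat) u v :
  e u v -> ndist (s u) (s v) <= bw_width e s.
Proof.
move=> Huv; rewrite /bw_width.
apply: leq_trans (leq_bigmax_cond _ (isT : predT u)).
by apply: (@leq_bigmax_cond _ (fun v => e u v) (fun v => ndist (s u) (s v)) v Huv).
Qed.

Lemma bandwidth_ex (T : finType) (e : rel T) :
  exists s : T -> nat, injective s /\
    forall u v, e u v -> ndist (s u) (s v) <= bandwidth e.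
Proof.
have [s [Hs Hw]] : exists s : {ffun T -> 'I_#|T|}, injectiveb s /\
    bw_width e (fun x => nat_of_ord (s x)) <= bandwidth e.
  rewrite /bandwidth; apply: (big_ind (fun x => exists s : {ffun T -> 'I_#|T|}, injectiveb s /\ bw_width e (fun x => nat_of_ord (s x)) <= x)).
  - exists [ffun x => enum_rank x]; split.
      by apply/injectiveP => x y; rewrite !ffunE => /enum_rank_inj.
    apply: width_le => u v _; apply: ndist_lt; exact: ltn_ord.
  - move=> x y [s1 [H1 W1]] [s2 [H2 W2]].
    case: (leqP x y) => Hxy.
      by exists s1; split => //; rewrite (minn_idPl Hxy).
    by exists s2; split => //; rewrite (minn_idPr (ltnW Hxy)).
  - by move=> s Hs; exists s.
exists (fun x => nat_of_ord (s x)); split.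
  by move=> x y /ord_inj; apply/injectiveP.
by move=> u v Huv; apply: leq_trans (width_edge _ Huv) Hw.
Qed.

Section Compress.
Variables (V : finType) (f : V -> nat).
Hypothesis finj : injective f.
Definition rk x := #|[set y | f y < f x]|.

Lemma rk_lt x : rk x < #|V|.
Proof.
rewrite /rk -(cardsC [set y | f y < f x]).
have : 0 < #|~: [set y | f y < f x]|.
  by apply/card_gt0P; exists x; rewrite !inE ltnn.
lia.
Qed.

Lemma rk_diff x y : f x < f y -> rk x < rk y /\ rk y - rk x <= f y - f x.
Proof.
move=> Hxy; rewrite /rk.
set A := [set z | f z < f y]; set B := [set z | f z < f x].
have sBA : B \subset A by apply/subsetP => z; rewrite !inE => H; lia.
have hD := cardsD A B; rewrite (setIidPr sBA) in hD.
have hBA := subset_leq_card sBA.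
have h1 : 0 < #|A :\: B| by apply/card_gt0P; exists x; rewrite !inE ltnn Hxy.
have h2 : #|A :\: B| <= f y - f x.
  rewrite cardE -(size_map f).
  have -> : f y - f x = size (iota (f x) (f y - f x)) by rewrite size_iota.
  apply: uniq_leq_size; first by rewrite (map_inj_uniq finj) enum_uniq.
  move=> n /mapP [z]; rewrite mem_enum !inE -leqNgt => /andP [H1 H2] ->.
  rewrite mem_iota; lia.
lia.
Qed.

Lemma rk_inj : injective rk.
Proof.
move=> x y Hr; case: (ltngtP (f x) (f y)) => H.
- by have [] := rk_diff H; lia.
- by have [] := rk_diff H; lia.
- exact: finj.
Qed.

Lemma rk_dist x y : ndist (rk x) (rk y) <= ndist (f x) (f y).
Proof.
rewrite /ndist; case: (ltngtP (f x) (f y)) => H.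
- by have [] := rk_diff H; lia.
- by have [] := rk_diff H; lia.
- by rewrite (finj H); lia.
Qed.
End Compress.

Lemma bandwidth_le (T : finType) (e : rel T) (f : T -> nat) W :
  injective f -> (forall u v, e u v -> ndist (f u) (f v) <= W) ->
  bandwidth e <= W.
Proof.
move=> finj H.
pose s : {ffun T -> 'I_#|T|} := [ffun x => Ordinal (rk_lt f x)].
have Hs : injectiveb s.
  apply/injectiveP => x y; rewrite !ffunE => /(congr1 val) /= /(rk_inj finj); done.
apply: (@leq_trans (bw_width e (fun x => nat_of_ord (s x)))).
  rewrite /bandwidth. apply: bigmin_le. exact: Hs.
apply: width_le => u v Huv; rewrite !ffunE /=.
have := rk_dist finj u v; have := H _ _ Huv. rewrite /ndist; lia.
Qed.

Lemma divmod_uniq M q1 r1 q2 r2 :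
  r1 < M -> r2 < M -> q1 * M + r1 = q2 * M + r2 -> q1 = q2 /\ r1 = r2.
Proof.
move=> h1 h2 E; have M0 : 0 < M by lia.
have := congr1 (divn^~ M) E; rewrite !divnMDl // !divn_small // !addn0 => Eq.
split => //; subst; lia.
Qed.

Section Main.
Variables (T U : finType) (e : rel T) (h : rel U) (a b : U) (o : rel T) (bG : nat).
Hypotheses (esym : symmetric e) (eirr : irreflexive e) (ab : a != b)
  (oasym : forall u v, e u v -> o u v != o v u).
Variable sg : T -> nat.
Hypotheses (sinj : injective sg) (sw : forall u v, e u v -> ndist (sg u) (sg v) <= bG).

Let K := #|U| - 2.
Let M := 1 + K * bG.

Lemma cardI : #|@inner U a b| <= K.
Proof.
rewrite /inner card_sig /K.
have -> : #|[pred x | (x != a) && (x != b)]| = #|[set: U] :\ a :\ b|.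
  by apply: eq_card => x; rewrite !inE; case: (x == a); case: (x == b).
have h1 := cardsD1 a [set: U]; have h2 := cardsD1 b ([set: U] :\ a).
rewrite cardsT !inE in h1 h2; rewrite eq_sym ab /= in h2; lia.
Qed.

Definition lo (p : oedge e o) : T :=
  if sg (val p).1 < sg (val p).2 then (val p).1 else (val p).2.
Definition hi (p : oedge e o) : T :=
  if sg (val p).1 < sg (val p).2 then (val p).2 else (val p).1.

Lemma pe (p : oedge e o) : e (val p).1 (val p).2 && o (val p).1 (val p).2.
Proof. exact: valP p. Qed.

Lemma lohi (p : oedge e o) :
  sg (lo p) < sg (hi p) /\ sg (hi p) - sg (lo p) <= bG /\
  ((sg (val p).1 = sg (lo p) /\ sg (val p).2 = sg (hi p)) \/
   (sg (val p).1 = sg (hi p) /\ sg (val p).2 = sg (lo p))).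
Proof.
rewrite /lo /hi; case: p => [[p1 p2] Hp] /=.
have /andP [E _] := Hp.
have W := sw E.
have N : p1 != p2 by apply/eqP => Q; rewrite Q eirr in E.
have N' : sg p1 != sg p2 by apply: contra N => /eqP /sinj ->.
move: W N'; rewrite /ndist; case: ifP => H /=; move=> W N'.
  split; first by []. split; [lia | by left].
split. move/negbT: H; rewrite -leqNgt => H. lia.
split; [lia | by right].
Qed.

Lemma lohi_inj p q : lo p = lo q -> hi p = hi q -> p = q.
Proof.
case: p q (pe p) (pe q) => [[p1 p2] Hp] [[q1 q2] Hq] /= /andP [Ep Op] /andP [Eq Oq].
rewrite /lo /hi /= => El Eh; apply: val_inj => /=.
move: El Eh; case: ifP => _; case: ifP => _ E1 E2; subst => //.
- by have := oasym Ep; rewrite Op Oq.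
- by have := oasym Ep; rewrite Op Oq.
Qed.

Definition fGH (w : GH_vertex e o a b) : nat :=
  match w with
  | inl v => sg v * M
  | inr (p, x) => sg (lo p) * M + (1 + (sg (hi p) - sg (lo p) - 1) * K + enum_rank x)
  end.

Lemma inr_small (p : oedge e o) (x : inner a b) :
  0 < 1 + (sg (hi p) - sg (lo p) - 1) * K + enum_rank x < M /\
  1 + (sg (hi p) - sg (lo p) - 1) * K + enum_rank x <= (sg (hi p) - sg (lo p)) * M.
Proof.
have [H1 [H2 _]] := lohi p.
have j : enum_rank x < K by apply: leq_trans (ltn_ord _) cardI.
set d := sg (hi p) - sg (lo p) in H2 *.
have d1 : 1 <= d by rewrite /d; lia.
have A : (d - 1 + 1) * K <= bG * K by rewrite leq_mul2r; apply/orP; right; lia.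
have B : K <= M by rewrite /M; have := leq_pmulr K (leq_trans d1 H2); lia.
have C : d * K <= d * M by rewrite leq_mul2l B orbT.
rewrite /M; nia.
Qed.

Lemma fGH_inj : injective fGH.
Proof.
have M0 : 0 < M by rewrite /M.
move=> [w1|[p1 x1]] [w2|[p2 x2]] /=.
- move=> E; have : sg w1 * M == sg w2 * M by rewrite E.
  by rewrite eqn_pmul2r // => /eqP /sinj ->.
- have [/andP [r0 rM] _] := inr_small p2 x2.
  rewrite -[sg w1 * M]addn0 => /divmod_uniq [] //; lia.
- have [/andP [r0 rM] _] := inr_small p1 x1.
  rewrite -[sg w2 * M]addn0 => /divmod_uniq [] //; lia.
- have [/andP [r01 rM1] _] := inr_small p1 x1.
  have [/andP [r02 rM2] _] := inr_small p2 x2.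
  case/divmod_uniq => // El Er.
  have j1 : enum_rank x1 < K by apply: leq_trans (ltn_ord _) cardI.
  have j2 : enum_rank x2 < K by apply: leq_trans (ltn_ord _) cardI.
  have Er' : (sg (hi p1) - sg (lo p1) - 1) * K + enum_rank x1 =
             (sg (hi p2) - sg (lo p2) - 1) * K + enum_rank x2.
    by apply/eqP; move/eqP: Er; rewrite -!addnA eqn_add2l.
  case/divmod_uniq: Er' => // Ed Ej.
  have [H1 _] := lohi p1; have [H2 _] := lohi p2.
  have Ehi : sg (hi p1) = sg (hi p2) by lia.
  have -> : x1 = x2 by apply: enum_rank_inj; apply: ord_inj.
  by rewrite (lohi_inj (sinj El) (sinj Ehi)).
Qed.

Lemma fGH_bounds (p : oedge e o) z :
  sg (lo p) * M <= fGH (attach a b p z) <= sg (lo p) * M + (sg (hi p) - sg (lo p)) * M.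
Proof.
have [H1 [H2 H3]] := lohi p.
have Eh : sg (hi p) * M = sg (lo p) * M + (sg (hi p) - sg (lo p)) * M.
  by rewrite -mulnDl subnKC // ltnW.
have G1 : forall v, (sg v = sg (lo p)) \/ (sg v = sg (hi p)) ->
    sg (lo p) * M <= sg v * M <= sg (lo p) * M + (sg (hi p) - sg (lo p)) * M.
  move=> v [->|->]; first by rewrite leqnn leq_addr.
  by rewrite Eh leqnn leq_addr.
rewrite /attach; case: ifP => _.
  by apply: G1; case: H3 => [[-> _]|[-> _]]; auto.
case: ifP => _.
  by apply: G1; case: H3 => [[_ ->]|[_ ->]]; auto.
case: (insub z) => [y|] /=.
  by have [_ C] := inr_small p y; rewrite leq_addr leq_add2l.
by apply: G1; case: H3 => [[-> _]|[-> _]]; auto.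
Qed.

Lemma main_bound : bandwidth (@GH_rel T U e o h a b) <= (bG + 1) * M.
Proof.
apply: (bandwidth_le (f := fGH)); first exact: fGH_inj.
move=> w1 w2 /existsP [p /existsP [x /existsP [y /and3P [_ /eqP <- /eqP <-]]]].
have := fGH_bounds p x; have := fGH_bounds p y.
have [_ [H2 _]] := lohi p.
have : (sg (hi p) - sg (lo p)) * M <= (bG + 1) * M.
  by rewrite leq_mul2r; apply/orP; right; lia.
rewrite /ndist; lia.
Qed.
End Main.

Theorem mainTheorem16 (T U : finType) (e : rel T) (h : rel U) (a b : U)
    (o : rel T) (bG : nat) :
  simple_graph e -> simple_graph h -> a != b -> 2 <= #|U| ->
  (forall u v, e u v -> o u v != o v u) ->
  bandwidth e = bG ->
  bandwidth (@GH_rel T U e o h a b) <= (bG + 1) * (1 + (#|U| - 2) * bG).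
Proof.
move=> [es ei] _ ab _ oas hb.
have [sg [sinj sw]] := bandwidth_ex e; rewrite hb in sw.
exact: (main_bound h ei ab oas sinj sw).
Qed.
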